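(* Let $P$ be a set of $n$ colored points, each with a weight from a faithful semigroup $(\mathcal{S},+)$, and let $\Gamma$ be any optimal storage scheme for $P$ (for colored weighted dominance queries). Then each generator in $\Gamma$ contains points of only a single color.
   Context: Setting (arithmetic model): each point $p\in P$ has a color from $\{1,\dots,\phi\}$ and a weight $w(p)\in\mathcal{S}$; $P_c$ is the set of points of color $c$. A query $Q$ (a dominance range $(-\infty,q_1]\times\cdots\times(-\infty,q_d]$) asks for $w(P_c\cap Q)=\sum_{p\in P_c\cap Q}w(p)$ for every color $c$ with $P_c\cap Q\neq\emptyset$. A generator is a subset $G\subseteq P$ together with the stored value $\sum_{p\in G}w(p)$. A storage scheme is a collection $\Gamma$ of generators such that for every query $Q$ and every color $c$ with $P_c\cap Q\ne\emptyset$, the value $w(P_c\cap Q)$ can be obtained as a sum of (values of) generators from $\Gamma$, where the equality must hold for every assignment of weights from $\mathcal{S}$ to the points (the generator subsets being fixed). The size of $\Gamma$ is its number of generators; an optimal storage scheme is one minimizing the query cost (the number of generators summed). A semigroup $(\mathcal{S},+)$ is faithful if for every $n>0$, all $\emptyset\ne T_1,T_2\subseteq\{1,\dots,n\}$ with $T_1\neq T_2$, and all positive integers $\alpha_i$ ($i\in T_1$), $\beta_j$ ($j\in T_2$), the equation $\sum_{i\in T_1}\alpha_i s_i=\sum_{j\in T_2}\beta_j s_j$ is not an identity, i.e. it fails for some choice of $s_1,\dots,s_n\in\mathcal{S}$. *)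

(* Defs.v *)
From mathcomp Require Import all_boot all_order all_algebra.
Set Implicit Arguments. Unset Strict Implicit. Unset Printing Implicit Defensive.
Import Order.TTheory GRing.Theory Num.Theory.
Local Open Scope ring_scope.

(* ---- Sums in a semigroup without identity: lift to option S,
        None playing the role of the empty sum. ---- *)
Definition oplus (S : Type) (op : S -> S -> S) (a b : option S) : option S :=
  match a, b with
  | Some x, Some y => Some (op x y)
  | None, _ => b
  | _, None => a
  end.

Definition osum (S : Type) (op : S -> S -> S) (s : seq (option S)) : option S :=
  foldr (oplus op) None s.

(* k * x for k >= 1 : x + x + ... + x (k copies); meaningful for k >= 1 *)
Definition smul (S : Type) (op : S -> S -> S) (k : nat) (x : S) : S :=
  iter k.-1 (op x) x.

Definition wsum (S : Type) (op : S -> S -> S) (n : nat) (w : 'I_n -> S)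
  (A : {set 'I_n}) : option S :=
  osum op [seq Some (w p) | p <- enum A].

Definition faithful (S : Type) (op : S -> S -> S) : Prop :=
  forall (m : nat) (T1 T2 : {set 'I_m}) (alpha beta : 'I_m -> nat),
    T1 != set0 -> T2 != set0 -> T1 != T2 ->
    (forall i, i \in T1 -> (0 < alpha i)%N) ->
    (forall j, j \in T2 -> (0 < beta j)%N) ->
    exists s : 'I_m -> S,
      osum op [seq Some (smul op (alpha i) (s i)) | i <- enum T1]
      <> osum op [seq Some (smul op (beta j) (s j)) | j <- enum T2].

Definition in_query (R : realFieldType) (n d : nat) (pt : 'I_n -> 'I_d -> R)
  (q : 'I_d -> R) : {set 'I_n} :=
  [set p | [forall i, pt p i <= q i]].

Definition color_class (n phi : nat) (col : 'I_n -> 'I_phi) (c : 'I_phi)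
  : {set 'I_n} := [set p | col p == c].

(* gs (a list of generators of Gamma, repetitions allowed) represents
   w(P_c ∩ Q) for every assignment of weights *)
Definition represents (S : Type) (op : S -> S -> S) (n : nat)
  (Gamma : {set {set 'I_n}}) (gs : seq {set 'I_n}) (A : {set 'I_n}) : Prop :=
  all (fun g => g \in Gamma) gs /\
  forall w : 'I_n -> S, osum op [seq wsum op w g | g <- gs] = wsum op w A.

Definition query_cost_le (S : Type) (op : S -> S -> S) (R : realFieldType)
  (n d phi : nat) (pt : 'I_n -> 'I_d -> R) (col : 'I_n -> 'I_phi)
  (Gamma : {set {set 'I_n}}) (k : nat) : Prop :=
  forall (q : 'I_d -> R) (c : 'I_phi),
    color_class col c :&: in_query pt q != set0 ->
    exists gs, (size gs <= k)%N /\
      represents op Gamma gs (color_class col c :&: in_query pt q).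

Definition storage_scheme (S : Type) (op : S -> S -> S) (R : realFieldType)
  (n d phi : nat) (pt : 'I_n -> 'I_d -> R) (col : 'I_n -> 'I_phi)
  (Gamma : {set {set 'I_n}}) : Prop :=
  forall (q : 'I_d -> R) (c : 'I_phi),
    color_class col c :&: in_query pt q != set0 ->
    exists gs, represents op Gamma gs (color_class col c :&: in_query pt q).

(* Optimal = Pareto-optimal w.r.t. (query cost, size): no storage scheme has
   query cost <= and size <=, with one of them strictly smaller.
   (cost Gamma' <= cost Gamma is expressed as: every bound k achieved by
   Gamma is achieved by Gamma'.) *)
Definition optimal_scheme (S : Type) (op : S -> S -> S) (R : realFieldType)
  (n d phi : nat) (pt : 'I_n -> 'I_d -> R) (col : 'I_n -> 'I_phi)
  (Gamma : {set {set 'I_n}}) : Prop :=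
  storage_scheme op pt col Gamma /\
  ~ (exists Gamma' : {set {set 'I_n}},
       storage_scheme op pt col Gamma' /\
       (forall k, query_cost_le op pt col Gamma k ->
                  query_cost_le op pt col Gamma' k) /\
       (#|Gamma'| <= #|Gamma|)%N /\
       ((exists k, query_cost_le op pt col Gamma' k /\
                   ~ query_cost_le op pt col Gamma k)
        \/ (#|Gamma'| < #|Gamma|)%N)).

(* Main.v *)
Require Import Defs.
From mathcomp Require Import all_boot all_order all_algebra.
Import Order.TTheory GRing.Theory Num.Theory.
Local Open Scope ring_scope.
Set Implicit Arguments. Unset Strict Implicit.
Local Open Scope nat_scope.

Definition cx (S : Type) (op : S -> S -> S) (k : nat) (x : S) : option S :=
  if k is 0%N then None else Some (smul op k x).
Definition comb (S : Type) (op : S -> S -> S) (a b : nat) (x y : S) :=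
  oplus op (cx op a x) (cx op b y).

Lemma oplusA (S : Type) (op : S -> S -> S) (opA : associative op) :
  associative (oplus op).
Proof. by case=> [a|] [b|] [c|] //=; rewrite opA. Qed.

Lemma oplusC (S : Type) (op : S -> S -> S) (opC : commutative op) :
  commutative (oplus op).
Proof. by case=> [a|] [b|] //=; rewrite opC. Qed.

Lemma iter_op (S : Type) (op : S -> S -> S) (opA : associative op) k x z :
  op x (iter k (op x) z) = op (iter k (op x) x) z.
Proof. by elim: k => [|k IH] //=; rewrite IH opA. Qed.

Lemma cxD (S : Type) (op : S -> S -> S) (opA : associative op) a b x :
  cx op (a + b) x = oplus op (cx op a x) (cx op b x).
Proof.
case: a => [|a]; case: b => [|b] //=; rewrite ?addn0 //.
rewrite /smul /= addnS /= iterD /= iter_op //.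
Qed.

Lemma combD (S : Type) (op : S -> S -> S) (opA : associative op)
  (opC : commutative op) a b a' b' x y :
  oplus op (comb op a b x y) (comb op a' b' x y) = comb op (a + a') (b + b') x y.
Proof.
rewrite /comb !cxD //.
set A := cx op a x; set B := cx op b y; set C := cx op a' x; set D := cx op b' y.
rewrite -!(oplusA opA) (oplusA opA B) (oplusC opC B) -(oplusA opA) //.
Qed.

Lemma osum_cons (S : Type) (op : S -> S -> S) a s :
  osum op (a :: s) = oplus op a (osum op s).
Proof. by []. Qed.

Lemma osum_w (S : Type) (op : S -> S -> S) (opA : associative op)
  (opC : commutative op) (n : nat) (p0 : 'I_n) x y (l : seq 'I_n) :
  osum op [seq Some (if p == p0 then x else y) | p <- l] =
  comb op (count (pred1 p0) l) (count (predC1 p0) l) x y.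
Proof.
elim: l => [|p l IH] //.
rewrite map_cons osum_cons IH; cbv beta.
have [->|H] := eqVneq p p0.
  have -> : Some x = comb op 1 0 x y by [].
  by rewrite combD //=; congr comb; rewrite /= eqxx.

have -> : Some y = comb op 0 1 x y by [].
by rewrite combD //=; congr comb; rewrite /= (negbTE H).
Qed.

Lemma osum_gs (S : Type) (op : S -> S -> S) (opA : associative op)
  (opC : commutative op) (n : nat) (p0 : 'I_n) x y (gs : seq {set 'I_n}) :
  osum op [seq wsum op (fun p => if p == p0 then x else y) g | g <- gs] =
  comb op (sumn [seq count (pred1 p0) (enum g) | g : {set 'I_n} <- gs])
          (sumn [seq count (predC1 p0) (enum g) | g : {set 'I_n} <- gs]) x y.
Proof.
elim: gs => [|g gs IH] //.
rewrite map_cons osum_cons IH /wsum osum_w //.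
by rewrite combD.
Qed.

Lemma le_sumn (s : seq nat) x : x \in s -> x <= sumn s.
Proof.
elim: s => [|y s IH] //=; rewrite inE => /orP [/eqP ->|/IH H]; first exact: leq_addr.
by apply: (leq_trans H); apply: leq_addl.
Qed.

Lemma enum_I2 : enum [set: 'I_2] = [:: ord0; ord_max].
Proof. by apply: (inj_map val_inj); rewrite enum_setT -enumT val_enum_ord. Qed.

Lemma no_mixed (S : Type) (op : S -> S -> S)
  (opA : associative op) (opC : commutative op) (hF : faithful op)
  (n : nat) (p0 : 'I_n) (g A : {set 'I_n}) (gs : seq {set 'I_n}) :
  p0 \in g -> g \in gs -> p0 \notin A -> A != set0 ->
  ~ (forall w, osum op [seq wsum op w h | h <- gs] = wsum op w A).
Proof.
move=> Hp0 Hg HA HA0 Hw.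
set a := sumn [seq count (pred1 p0) (enum h) | h : {set 'I_n} <- gs].
set b := sumn [seq count (predC1 p0) (enum h) | h : {set 'I_n} <- gs].
set B := count (predC1 p0) (enum A).
have Ha : 0 < a.
  apply: (@leq_trans (count (pred1 p0) (enum g))).
    by rewrite -has_count has_pred1 mem_enum.
  by apply: le_sumn; apply: map_f.
have HA1 : count (pred1 p0) (enum A) = 0 by apply/count_memPn; rewrite mem_enum.
have HB : 0 < B.
  case/set0Pn: HA0 => q Hq; rewrite /B -has_count; apply/hasP; exists q.
    by rewrite mem_enum.
  by rewrite /= ; apply: contraNneq HA => <-.
have Ew : forall x y, comb op a b x y = comb op 0 B x y.
  move=> x y; have := Hw (fun p => if p == p0 then x else y).
  by rewrite osum_gs // /wsum osum_w // -/a -/b -/B HA1.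
clearbody a b B.
case: B HB Ew => // B' _ Ew.
case: a Ha Ew => // a' _ Ew.
pose T2 : {set 'I_2} := [set ord_max].
have H2 : T2 != set0 by apply/set0Pn; exists ord_max; rewrite inE.
case: b Ew => [|b'] Ew.
- pose alpha (i : 'I_2) := if i == ord0 then a'.+1 else 0.
  pose T1 : {set 'I_2} := [set ord0].
  have H1 : T1 != set0 by apply/set0Pn; exists ord0; rewrite inE.
  have H3 : T1 != T2.
    apply/eqP => E; have : ord0 \in T1 by rewrite inE.
    by rewrite E inE.
  have H4 : forall i, i \in T1 -> 0 < alpha i.
    by move=> i; rewrite inE => /eqP ->; rewrite /alpha eqxx.
  have [s Hs] := hF 2 T1 T2 alpha (fun _ => B'.+1) H1 H2 H3 H4 (fun _ _ => erefl).
  apply: Hs; have := Ew (s ord0) (s ord_max).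
  by rewrite /T1 /T2 !enum_set1 /= /alpha eqxx.
- pose alpha (i : 'I_2) := if i == ord0 then a'.+1 else b'.+1.
  pose T1 : {set 'I_2} := setT.
  have H1 : T1 != set0 by apply/set0Pn; exists ord0; rewrite inE.
  have H3 : T1 != T2.
    apply/eqP => E; have : ord0 \in T1 by rewrite inE.
    by rewrite E inE.
  have H4 : forall i, i \in T1 -> 0 < alpha i.
    by move=> i _; rewrite /alpha; case: eqP.
  have [s Hs] := hF 2 T1 T2 alpha (fun _ => B'.+1) H1 H2 H3 H4 (fun _ _ => erefl).
  apply: Hs; have := Ew (s ord0) (s ord_max).
  by rewrite /T1 /T2 enum_set1 enum_I2 /= /alpha eqxx.
Qed.

Lemma represents_D (S : Type) (op : S -> S -> S) (n : nat)
  (Gamma : {set {set 'I_n}}) g gs A :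
  represents op Gamma gs A -> g \notin gs -> represents op (Gamma :\ g) gs A.
Proof.
move=> [/allP Hall Hw] Hg; split => //; apply/allP => h Hh.
rewrite !inE Hall // andbT; by apply: contraNneq Hg => <-.
Qed.

Local Close Scope nat_scope.

Theorem lemma7 (S : Type) (op : S -> S -> S)
  (opA : associative op) (opC : commutative op) (hF : faithful op)
  (R : realFieldType) (n d phi : nat)
  (pt : 'I_n -> 'I_d -> R) (col : 'I_n -> 'I_phi)
  (Gamma : {set {set 'I_n}}) :
  optimal_scheme op pt col Gamma ->
  forall g, g \in Gamma ->
    forall p p', p \in g -> p' \in g -> col p = col p'.
Proof.
move=> [Hsch Hopt] g Hg p p' Hp Hp'.
case: (eqVneq (col p) (col p')) => // Hne; exfalso.
have key : forall q c gs,
    color_class col c :&: in_query pt q != set0 ->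
    represents op Gamma gs (color_class col c :&: in_query pt q) -> g \notin gs.
  move=> q c gs HA [_ Hw]; apply/negP => Hgs.
  pose p0 := if col p == c then p' else p.
  have Hp0 : p0 \in g by rewrite /p0; case: ifP.
  have Hc : col p0 != c.
    rewrite /p0; case: ifP => [/eqP <-|/negbT] //; by rewrite eq_sym.
  apply: (no_mixed opA opC hF Hp0 Hgs _ HA Hw).
  by rewrite !inE negb_and Hc.
apply: Hopt; exists (Gamma :\ g); split; last split; last split.
- move=> q c HA; have [gs Hr] := Hsch q c HA.
  by exists gs; apply: represents_D => //; apply: key Hr.
- move=> k Hk q c HA; have [gs [Hs Hr]] := Hk q c HA.
  by exists gs; split => //; apply: represents_D => //; apply: key Hr.
- by rewrite (cardsD1 g Gamma) leq_addl.
- by right; rewrite (cardsD1 g Gamma) Hg.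
Qed.
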